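(* Let $q \in C^1(\mathbb{R}^n,\mathbb{R})$ be a scalar function, and let $A$, $B$ and $D$ be linear differential operators with constant coefficients on functions $\mathbb{R}^n\to\mathbb{R}$ with $D = A + B$. Suppose there exist natural numbers $\lambda$ and $k$ and a sufficiently smooth function $W:\mathbb{R}^n\to\mathbb{R}$ such that $$A^{\lambda+k} W(\mathbf{x}) = q(\mathbf{x}) \quad\text{(integration condition)},\qquad B^{\lambda+1} W(\mathbf{x}) = 0 \quad\text{(annihilator condition)}.$$ Define $$Q(\mathbf{x}) := \sum_{p=0}^{\lambda} (-1)^p \binom{k+p-1}{p} A^{\lambda-p} B^p W(\mathbf{x}).$$ Then $D^k Q = q$.
   Context: Powers of operators denote repeated application, with $A^0$, $B^0$, $D^0$ the identity. *)

(* Defs.v *)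
From HB Require Import structures.
From mathcomp Require Import all_boot all_order all_algebra.
From mathcomp Require Import all_classical all_reals all_analysis.
Set Implicit Arguments. Unset Strict Implicit. Unset Printing Implicit Defensive.
Import Order.TTheory GRing.Theory Num.Theory.
Import numFieldNormedType.Exports.
Local Open Scope ring_scope.

Definition partial {R : realType} {n : nat} (i : 'I_n)
  (f : 'rV[R]_n -> R) : 'rV[R]_n -> R :=
  fun x => derive f x (delta_mx 0 i).

Definition dmon {R : realType} {n : nat} (alpha : 'I_n -> nat)
  (f : 'rV[R]_n -> R) : 'rV[R]_n -> R :=
  foldr (fun i g => iter (alpha i) (partial i) g) f (enum 'I_n).

(* A linear differential operator with constant coefficients:
   a finite formal sum  sum_t c_t d^{alpha_t}. *)
Definition diffop (R : realType) (n : nat) := seq (R * ('I_n -> nat)).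

Definition apply_op {R : realType} {n : nat} (L : diffop R n)
  (f : 'rV[R]_n -> R) : 'rV[R]_n -> R :=
  fun x => \sum_(t <- L) t.1 * dmon t.2 f x.

Definition op_pow {R : realType} {n : nat} (L : diffop R n) (p : nat)
  (f : 'rV[R]_n -> R) : 'rV[R]_n -> R := iter p (apply_op L) f.

Definition partials {R : realType} {n : nat} (s : seq 'I_n)
  (f : 'rV[R]_n -> R) : 'rV[R]_n -> R :=
  foldr partial f s.

(* C^infinity: every iterated partial derivative exists and is differentiable
   (hence all partial derivatives of all orders exist and are continuous). *)
Definition smooth {R : realType} {n : nat} (f : 'rV[R]_n -> R) : Prop :=
  forall (s : seq 'I_n) (x : 'rV[R]_n), differentiable (partials s f) x.

Definition C1 {R : realType} {n : nat} (f : 'rV[R]_n -> R) : Prop :=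
  (forall x : 'rV[R]_n, differentiable f x) /\
  (forall i : 'I_n, continuous (partial i f)).

(* Main.v *)
Require Import Defs.
From HB Require Import structures.
From mathcomp Require Import all_boot all_order all_algebra.
From mathcomp Require Import all_classical all_reals all_analysis.
From mathcomp Require Import ring lra.
Import Order.TTheory GRing.Theory Num.Theory.
Import numFieldNormedType.Exports.
Local Open Scope ring_scope.



Section Clairaut.
Context {R : realType} {n : nat}.
Local Notation V := 'rV[R]_n.

Lemma line_is_derive (g : V -> R) (a u : V) (s : R) :
  derivable g (a + s *: u) u ->
  is_derive s 1 (fun t : R => g (a + t *: u)) (derive g (a + s *: u) u).
Proof.
move=> dg.
have E : (fun h : R => h^-1 *: (((fun t : R => g (a + t *: u)) \o shift s) (h *: 1)
            - g (a + s *: u)))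
       = (fun h : R => h^-1 *: ((g \o shift (a + s *: u)) (h *: u) - g (a + s *: u))).
  apply/funext => h /=; congr (_ *: (g _ - _)).
  rewrite /shift /= [h *: 1]mulr1 scalerDl. by rewrite addrCA.
constructor; first by rewrite /derivable E.
by rewrite /derive E.
Qed.

Lemma mvt0 (F dF : R -> R) (h : R) : 0 < h -> (forall t : R, is_derive t (1:R) F (dF t)) ->
  exists2 c, 0 < c < h & F h - F 0 = h * dF c.
Proof.
move=> h0 dF0.
have [|c c1 c2] := @MVT R F dF 0 h h0 (fun t _ => dF0 t).
  apply: derivable_within_continuous => t _.
  by have [] := dF0 t.
exists c; first by move: c1; rewrite in_itv.
by rewrite c2 subr0 mulrC.
Qed.

Lemma second_diff (f : V -> R) (x u v : V) (h : R) : 0 < h ->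
  (forall y, derivable f y u) -> (forall y, derivable (fun y => derive f y u) y v) ->
  exists s t, [/\ 0 < s < h, 0 < t < h &
   f (x + h *: v + h *: u) - f (x + h *: u) - (f (x + h *: v) - f x)
     = h ^+ 2 * derive (fun y => derive f y u) (x + s *: u + t *: v) v].
Proof.
move=> h0 du dvu.
have [c c1 E1] := @mvt0
  (fun t => f (x + h *: v + t *: u) - f (x + t *: u))
  (fun t => derive f (x + h *: v + t *: u) u - derive f (x + t *: u) u) h h0
  (fun t => is_deriveB (line_is_derive _ _ _ _ (du _)) (line_is_derive _ _ _ _ (du _))).
have [d d1 E2] := @mvt0
  (fun t => derive f (x + c *: u + t *: v) u)
  (fun t => derive (fun y => derive f y u) (x + c *: u + t *: v) v) h h0
  (fun t => line_is_derive _ _ _ _ (dvu _)).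
exists c, d; split => //.
move: E1 E2; rewrite !scale0r !addr0 => ->.
rewrite [x + h *: v + c *: u]addrAC => ->; by rewrite expr2 mulrA.
Qed.


Lemma aux3 (z a b : R) : 0 <= a -> z <= a + b -> a < z / 3 -> b < z / 3 -> False.
Proof. move=> *; lra. Qed.

Lemma ball_pt (x u v : V) (s t h d : R) : 0 < s < h -> 0 < t < h ->
  h * (`|u| + `|v|) < d -> `|x - (x + s *: u + t *: v)| < d.
Proof.
move=> /andP[s0 sh] /andP[t0 th] hd.
rewrite -(addrA x) opprD addrA subrr sub0r normrN.
apply: le_lt_trans (ler_normD _ _) _.
rewrite !normrZ (gtr0_norm s0) (gtr0_norm t0).
apply: le_lt_trans hd; rewrite mulrDr.
by apply: lerD; apply: ler_wpM2r => //; exact: ltW.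
Qed.

Lemma clairaut_gen (f : V -> R) (x u v : V) :
 (forall y, derivable f y u) -> (forall y, derivable f y v) ->
 (forall y, derivable (fun y => derive f y u) y v) ->
 (forall y, derivable (fun y => derive f y v) y u) ->
 {for x, continuous (fun y => derive (fun z => derive f z u) y v)} ->
 {for x, continuous (fun y => derive (fun z => derive f z v) y u)} ->
 derive (fun z => derive f z u) x v = derive (fun z => derive f z v) x u.
Proof.
move=> du dv duv dvu cF cG.
set F := (fun y => derive (fun z => derive f z u) y v) in cF *.
set G := (fun y => derive (fun z => derive f z v) y u) in cG *.
change (F x = G x).
apply/eqP; rewrite -subr_eq0; apply/negPn/negP => Hne.
set e := `|F x - G x| / 3.
have e0 : 0 < e by rewrite divr_gt0 // normr_gt0.
have [d1 /= d10 H1] := (nbhs_normP _ _).1 (cvgr_dist_lt _ _ cF _ e0).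
have [d2 /= d20 H2] := (nbhs_normP _ _).1 (cvgr_dist_lt _ _ cG _ e0).
set d := Num.min d1 d2.
have d0 : 0 < d by rewrite lt_min d10 d20.
set M := `|u| + `|v| + 1.
have M0 : 0 < M by rewrite ltr_wpDl // addr_ge0.
set h := d / M.
have h0 : 0 < h by rewrite divr_gt0.
have hd : h * (`|u| + `|v|) < d.
  rewrite /h -mulrA -[ltRHS]mulr1 ltr_pM2l // mulrC ltr_pdivrMr // mul1r /M ltrDl ltr01 //.
have [s [t [st1 st2 E1]]] := second_diff f x u v h h0 du duv.
have [s' [t' [st1' st2' E2]]] := second_diff f x v u h h0 dv dvu.
have hu : h ^+ 2 != 0 by rewrite expf_neq0 // gt_eqF.
have Eq : F (x + s *: u + t *: v) = G (x + s' *: v + t' *: u).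
  have E3 : h ^+ 2 * F (x + s *: u + t *: v) = h ^+ 2 * G (x + s' *: v + t' *: u).
    apply: (etrans (esym E1)). apply: (etrans _ E2). rewrite [x + h *: v + h *: u]addrAC.
    move: (f (x + h *: u + h *: v)) (f (x + h *: u)) (f (x + h *: v)) (f x) => a b c d'.
    by rewrite !opprB !addrA [a - b + d']addrAC [a - c + d']addrAC addrAC.
  exact: (mulfI hu E3).
have B1 : `|F x - F (x + s *: u + t *: v)| < e.
  apply: H1; rewrite /ball_ /=; apply: ball_pt st1 st2 _.
  by apply: lt_le_trans hd _; rewrite ge_min lexx.
have B2 : `|G x - G (x + s' *: v + t' *: u)| < e.
  apply: H2; rewrite /ball_ /=; apply: ball_pt st1' st2' _.
  rewrite addrC; apply: lt_le_trans hd _; by rewrite ge_min lexx orbT.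
move: B1 B2 Eq; rewrite /e.
move: (F (x + s *: u + t *: v)) (G (x + s' *: v + t' *: u)) (F x) (G x) => a b c g B1 B2 Eab.
rewrite Eab in B1.
have T := ler_distD b c g.
rewrite (distrC b g) in T. exact: (aux3 _ _ _ (normr_ge0 _) T B1 B2).
Qed.


Lemma smooth_partials (s : seq 'I_n) (f : V -> R) : smooth f -> smooth (partials s f).
Proof. by move=> Hf s' x; rewrite /partials -foldr_cat; apply: Hf. Qed.

Lemma smooth_partial i (f : V -> R) : smooth f -> smooth (partial i f).
Proof. exact: (smooth_partials [:: i]). Qed.

Lemma smooth_diff (f : V -> R) x : smooth f -> differentiable f x.
Proof. by move=> Hf; apply: (Hf [::]). Qed.

Lemma smooth_der (f : V -> R) x v : smooth f -> derivable f x v.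
Proof. by move=> Hf; apply/diff_derivable/smooth_diff. Qed.

Lemma smooth_cont (f : V -> R) x : smooth f -> {for x, continuous f}.
Proof. by move=> Hf; apply/differentiable_continuous/smooth_diff. Qed.

Lemma clairaut i j (f : V -> R) : smooth f ->
  partial i (partial j f) = partial j (partial i f).
Proof.
move=> Hf; apply/funext => x.
apply: clairaut_gen.
- by move=> y; apply: smooth_der.
- by move=> y; apply: smooth_der.
- by move=> y; apply: smooth_der; apply: smooth_partial.
- by move=> y; apply: smooth_der; apply: smooth_partial.
- by apply: smooth_cont; do 2 apply: smooth_partial.
- by apply: smooth_cont; do 2 apply: smooth_partial.
Qed.

End Clairaut.


Section Lin.
Context {R : realType} {n : nat}.
Local Notation V := 'rV[R]_n.
Implicit Types (f g : V -> R).

Lemma partial_partials i (s : seq 'I_n) f : smooth f ->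
  partial i (partials s f) = partials s (partial i f).
Proof.
elim: s => [//|j s IH] Hf /=.
by rewrite clairaut ?IH //; apply: smooth_partials.
Qed.

Lemma partials_comm (s t : seq 'I_n) f : smooth f ->
  partials t (partials s f) = partials s (partials t f).
Proof.
elim: t => [//|i t IH] Hf /=.
rewrite IH // partial_partials //; exact: smooth_partials.
Qed.

Definition dseq (alpha : 'I_n -> nat) : seq 'I_n :=
  flatten [seq nseq (alpha i) i | i <- enum 'I_n].

Lemma iter_partial m i f : iter m (partial i) f = partials (nseq m i) f.
Proof. by elim: m => [//|m IH] /=; rewrite IH. Qed.

Lemma dmonE alpha f : dmon alpha f = partials (dseq alpha) f.
Proof.
rewrite /dmon /dseq; elim: (enum 'I_n) => [//|i l IH] /=.
by rewrite IH iter_partial /partials foldr_cat.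
Qed.

Lemma smooth_dmon alpha f : smooth f -> smooth (dmon alpha f).
Proof. by rewrite dmonE; apply: smooth_partials. Qed.

Lemma dmon_comm alpha beta f : smooth f ->
  dmon alpha (dmon beta f) = dmon beta (dmon alpha f).
Proof. by move=> Hf; rewrite !dmonE partials_comm. Qed.

Definition lc {I : Type} (r : seq I) (c : I -> R) (F : I -> V -> R) : V -> R :=
  fun x => \sum_(j <- r) c j * F j x.

Lemma lc_is_derive (I : Type) (r : seq I) (c : I -> R) (F : I -> V -> R) x v :
  (forall j, derivable (F j) x v) ->
  is_derive x v (lc r c F) (\sum_(j <- r) c j * derive (F j) x v).
Proof.
move=> dF; elim: r => [|j r IH].
  have -> : lc [::] c F = cst 0 by apply/funext => y; rewrite /lc big_nil.
  by rewrite big_nil; apply: is_derive_cst.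
have -> : lc (j :: r) c F = (c j \*: F j) + lc r c F.
  by apply/funext => y; rewrite /lc big_cons.
rewrite big_cons; apply: is_deriveD => //.
exact: is_deriveZ (derivableP (dF j)).
Qed.

Lemma lc_diff (I : Type) (r : seq I) (c : I -> R) (F : I -> V -> R) x :
  (forall j, differentiable (F j) x) -> differentiable (lc r c F) x.
Proof.
move=> dF; elim: r => [|j r IH].
  have -> : lc [::] c F = cst 0 by apply/funext => y; rewrite /lc big_nil.
  exact: differentiable_cst.
have -> : lc (j :: r) c F = (c j \*: F j) + lc r c F.
  by apply/funext => y; rewrite /lc big_cons.
by apply: differentiableD => //; apply: differentiableZ.
Qed.

Lemma partial_lc (I : Type) (r : seq I) (c : I -> R) (F : I -> V -> R) i :
  (forall j, smooth (F j)) ->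
  partial i (lc r c F) = lc r c (fun j => partial i (F j)).
Proof.
move=> sF; apply/funext => x.
have := @lc_is_derive I r c F x (delta_mx 0 i) (fun j => smooth_der _ _ _ (sF j)).
by case.
Qed.

Lemma partials_lc (I : Type) (r : seq I) (c : I -> R) (F : I -> V -> R) s :
  (forall j, smooth (F j)) ->
  partials s (lc r c F) = lc r c (fun j => partials s (F j)).
Proof.
move=> sF; elim: s => [//|i s IH] /=.
rewrite IH partial_lc // => j; exact: smooth_partials.
Qed.

Lemma smooth_lc (I : Type) (r : seq I) (c : I -> R) (F : I -> V -> R) :
  (forall j, smooth (F j)) -> smooth (lc r c F).
Proof.
move=> sF s x; rewrite partials_lc //; apply: lc_diff => j.
by apply: smooth_diff; apply: smooth_partials.
Qed.

Lemma dmon_lc (I : Type) (r : seq I) (c : I -> R) (F : I -> V -> R) alpha :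
  (forall j, smooth (F j)) ->
  dmon alpha (lc r c F) = lc r c (fun j => dmon alpha (F j)).
Proof.
move=> sF; rewrite dmonE partials_lc //.
by apply/funext => x; rewrite /lc; apply: eq_bigr => j _; rewrite dmonE.
Qed.

Lemma smooth_apply (L : diffop R n) f : smooth f -> smooth (apply_op L f).
Proof.
move=> Hf; apply: (@smooth_lc _ L (fun t => t.1) (fun t => dmon t.2 f)) => t.
exact: smooth_dmon.
Qed.

Lemma apply_lc (L : diffop R n) (I : Type) (r : seq I) (c : I -> R) (F : I -> V -> R) :
  (forall j, smooth (F j)) ->
  apply_op L (lc r c F) = lc r c (fun j => apply_op L (F j)).
Proof.
move=> sF; apply/funext => x; rewrite /apply_op /lc.
under eq_bigr => t _ do rewrite dmon_lc // /lc big_distrr.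
rewrite exchange_big /=; apply: eq_bigr => j _; rewrite big_distrr /=.
by apply: eq_bigr => t _; rewrite mulrCA.
Qed.

Lemma apply_comm (A B : diffop R n) f : smooth f ->
  apply_op A (apply_op B f) = apply_op B (apply_op A f).
Proof.
move=> Hf.
rewrite [apply_op B f](_ : _ = lc B (fun t => t.1) (fun t => dmon t.2 f)) //.
rewrite [apply_op A f](_ : _ = lc A (fun t => t.1) (fun t => dmon t.2 f)) //.
rewrite apply_lc; last by move=> t; apply: smooth_dmon.
rewrite apply_lc; last by move=> t; apply: smooth_dmon.
apply/funext => x; rewrite /lc /apply_op /=.
under eq_bigr => u _ do rewrite big_distrr.
rewrite exchange_big /=; apply: eq_bigr => t _; rewrite big_distrr /=.
by apply: eq_bigr => u _; rewrite mulrCA dmon_comm.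
Qed.

End Lin.


Section Comb.
Context {R : realType}.

Definition cf (k p : nat) : R := (-1) ^+ p * ('C(k + p - 1, p))%:R.

Lemma cf_pascal k L : cf k.+1 L + cf k.+1 L.+1 = cf k L.+1.
Proof.
rewrite /cf.
have -> : (k.+1 + L - 1 = k + L)%N by rewrite addSn subn1.
have -> : (k.+1 + L.+1 - 1 = (k + L).+1)%N by rewrite addSn addnS subn1.
have -> : (k + L.+1 - 1 = k + L)%N by rewrite addnS subn1.
rewrite binS natrD exprS; ring.
Qed.

Lemma comb_id k L (u : nat -> R) :
  \sum_(p < L.+1) cf k.+1 p * u p + \sum_(p < L.+1) cf k.+1 p * u p.+1
  = \sum_(p < L.+1) cf k p * u p + cf k.+1 L * u L.+1.
Proof.
elim: L => [|L IH].
  by rewrite !big_ord1 /cf !bin0.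
rewrite !(big_ord_recr L.+1) /= addrACA IH -(cf_pascal k L); ring.
Qed.

End Comb.

Section Pow.
Context {R : realType} {n : nat}.
Local Notation V := 'rV[R]_n.
Implicit Types (f g : V -> R).

Lemma smooth_pow (L : diffop R n) p f : smooth f -> smooth (op_pow L p f).
Proof.
move=> Hf; elim: p => [//|p IH].
rewrite /op_pow iterS; exact: (smooth_apply L _ IH).
Qed.

Lemma pow_comm (A B : diffop R n) m f : smooth f ->
  apply_op B (op_pow A m f) = op_pow A m (apply_op B f).
Proof.
move=> Hf; elim: m => [//|m IH].
rewrite [LHS](_ : _ = apply_op B (apply_op A (op_pow A m f))) //.
by rewrite -apply_comm ?IH //; apply: smooth_pow.
Qed.

Lemma add_lc f g : f \+ g = lc [:: true; false] (fun _ => 1) (fun b : bool => if b then f else g).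
Proof. by apply/funext => x; rewrite /lc !big_cons big_nil /= !mul1r addr0. Qed.

Lemma smooth_add f g : smooth f -> smooth g -> smooth (f \+ g).
Proof.
by move=> Hf Hg; rewrite add_lc; apply: smooth_lc => -[].
Qed.

End Pow.

Theorem theorem4p1 (R : realType) (n : nat) (q : 'rV[R]_n -> R)
  (A B D : diffop R n) (lambda k : nat) (W : 'rV[R]_n -> R) :
  C1 q ->
  (forall f : 'rV[R]_n -> R, apply_op D f = apply_op A f \+ apply_op B f) ->
  smooth W ->
  op_pow A (lambda + k) W = q ->
  op_pow B lambda.+1 W = (fun _ => 0) ->
  op_pow D k
    (fun x => \sum_(p < lambda.+1)
        (-1) ^+ p * ('C(k + p - 1, p))%:R
          * op_pow A (lambda - p) (op_pow B p W) x) = q.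
Proof.
move=> _ hD sW hA hB.
have apply_add (L : diffop R n) (f g : 'rV[R]_n -> R) : smooth f -> smooth g ->
    apply_op L (f \+ g) = apply_op L f \+ apply_op L g.
  move=> sf sg; rewrite add_lc apply_lc; last by case.
  by apply/funext => x; rewrite /lc !big_cons big_nil /= !mul1r addr0.
have DA (g : 'rV[R]_n -> R) : smooth g ->
    apply_op D (apply_op A g) = apply_op A (apply_op D g).
  move=> sg; rewrite !hD apply_add; try exact: smooth_apply.
  by rewrite (apply_comm B A _ sg).
have DkA m (g : 'rV[R]_n -> R) : smooth g ->
    op_pow D m (apply_op A g) = apply_op A (op_pow D m g).
  move=> sg; elim: m => [//|m IH].
  have -> : op_pow D m.+1 (apply_op A g) = apply_op D (op_pow D m (apply_op A g)) by [].
  have -> : op_pow D m.+1 g = apply_op D (op_pow D m g) by [].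
  by rewrite IH DA //; apply: smooth_pow.
pose T (p : nat) := op_pow A (lambda - p) (op_pow B p W).
have sT p : smooth (T p) by do 2 apply: smooth_pow.
pose Q (m : nat) := lc (index_enum 'I_lambda.+1) (fun p : 'I_lambda.+1 => @cf R m p)
   (fun p => T p).
change (op_pow D k (Q k) = q).
have Step m : apply_op D (Q m.+1) = apply_op A (Q m).
  apply/funext => x; rewrite hD /= !apply_lc // /lc.
  pose u := fun j : nat => op_pow A (lambda.+1 - j) (op_pow B j W) x.
  have Ha (j : 'I_lambda.+1) : apply_op A (T j) x = u j.
    by rewrite /u subSn // -ltnS.
  have Hb (j : 'I_lambda.+1) : apply_op B (T j) x = u j.+1.
    by rewrite /T pow_comm ?subSS //; apply: smooth_pow.
  have E1 : \sum_(j <- index_enum 'I_lambda.+1) cf m.+1 j * apply_op A (T j) x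
      = \sum_(j < lambda.+1) cf m.+1 j * u j by apply: eq_bigr => j _; rewrite Ha.
  have E2 : \sum_(j <- index_enum 'I_lambda.+1) cf m.+1 j * apply_op B (T j) x
      = \sum_(j < lambda.+1) cf m.+1 j * u j.+1 by apply: eq_bigr => j _; rewrite Hb.
  have E3 : \sum_(j <- index_enum 'I_lambda.+1) cf m j * apply_op A (T j) x
      = \sum_(j < lambda.+1) cf m j * u j by apply: eq_bigr => j _; rewrite Ha.
  rewrite E1 E2 E3 comb_id.
  by rewrite /u subnn hB mulr0 addr0.
have Main m : op_pow D m (Q m) = op_pow A m (Q 0%N).
  elim: m => [//|m IH].
  have -> : op_pow D m.+1 (Q m.+1) = op_pow D m (apply_op D (Q m.+1)).
    by rewrite /op_pow iterSr.
  rewrite Step DkA ?IH //; exact: smooth_lc.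
have Q0 : Q 0%N = op_pow A lambda W.
  apply/funext => x; rewrite /Q /lc big_ord_recl big1 ?addr0 /=.
    by rewrite /cf expr0 mul1r bin0 mul1r /T subn0.
  by move=> i _; rewrite /cf /= add0n subn1 /= bin_small // mulr0 mul0r.
by rewrite Main Q0 -hA /op_pow -iterD addnC.
Qed.
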